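(* Let $p\ge 2$ and $n\ge 1$ be integers, let $\Sigma$ be a real $p\times p$ symmetric positive definite matrix, and let $x_1,\dots,x_n$ be i.i.d. $N(0,\Sigma)$ random vectors in $\mathbb{R}^p$. Let $\widehat S=\frac1n\sum_{i=1}^n x_ix_i^T$ and $\widehat F=\frac{\mathrm{Tr}(\widehat S)}{p}I_p$. Then the function $$\rho\mapsto E\left\{\left\|(1-\rho)\widehat S+\rho \widehat F-\Sigma\right\|_F^2\right\},\qquad \rho\in\mathbb{R},$$ has a unique minimizer $\rho_O$, and $$\rho_O=\frac{E\{\mathrm{Tr}((\Sigma-\widehat S)(\widehat F-\widehat S))\}}{E\{\|\widehat S-\widehat F\|_F^2\}}=\frac{(1-2/p)\,\mathrm{Tr}(\Sigma^2)+\mathrm{Tr}^2(\Sigma)}{(n+1-2/p)\,\mathrm{Tr}(\Sigma^2)+(1-n/p)\,\mathrm{Tr}^2(\Sigma)}.$$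
   Context: $\|\cdot\|_F$ is the Frobenius norm, $\mathrm{Tr}$ the trace, and $\mathrm{Tr}^2(A)$ means $(\mathrm{Tr}(A))^2$. $\widehat S$ is called the sample covariance and $\widehat F$ the shrinkage target; the estimator $(1-\rho_O)\widehat S+\rho_O\widehat F$ is called the oracle estimator. *)

(* Defs.v *)
(* No measure theory is installed, so the
   Gaussian expectation is built from (improper) Riemann integrals:
   x_i = A z_i with z a vector of i.i.d. standard normal coordinates and
   A A^T = Sigma, and E is the iterated improper Riemann integral against the
   standard normal density over the n*p coordinates of z. *)
From Stdlib Require Import Reals Lra ClassicalEpsilon.
Open Scope R_scope.

Fixpoint sumn (m : nat) (f : nat -> R) : R :=
  match m with
  | O => 0
  | S m' => sumn m' f + f m'
  end.

(* p x p real matrices: entries (j,k) with j,k < p *)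
Definition mat := nat -> nat -> R.

Definition trace (p : nat) (M : mat) : R := sumn p (fun j => M j j).

Definition trace_mul (p : nat) (M N : mat) : R :=
  sumn p (fun j => sumn p (fun k => M j k * N k j)).

Definition frob2 (p : nat) (M : mat) : R :=
  sumn p (fun j => sumn p (fun k => (M j k) ^ 2)).

Definition idmat (c : R) : mat := fun j k => if Nat.eqb j k then c else 0.

Definition std_density (t : R) : R := exp (- (t ^ 2) / 2) / sqrt (2 * PI).

Definition improper_integral (h : R -> R) (l : R) : Prop :=
  forall eps, eps > 0 -> exists M, forall a b, M <= a -> M <= b ->
    exists pr : Riemann_integrable h (- a) b, Rabs (RiemannInt pr - l) < eps.

Definition gauss1 (g : R -> R) : R :=
  epsilon (inhabits 0) (fun l => improper_integral (fun t => g t * std_density t) l).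

Definition upd (z : nat -> R) (k : nat) (t : R) : nat -> R :=
  fun j => if Nat.eqb j k then t else z j.

Fixpoint gexp (N : nat) (f : (nat -> R) -> R) : R :=
  match N with
  | O => f (fun _ => 0)
  | S N' => gexp N' (fun z => gauss1 (fun t => f (upd z N' t)))
  end.

(* x_i = A z_i, z_i = (z (i*p), ..., z (i*p + p - 1)); x_i ~ N(0, A A^T) *)
Definition sample (p : nat) (A : mat) (z : nat -> R) (i j : nat) : R :=
  sumn p (fun k => A j k * z (i * p + k)%nat).

Definition Shat (p n : nat) (A : mat) (z : nat -> R) : mat :=
  fun j k => / INR n * sumn n (fun i => sample p A z i j * sample p A z i k).

Definition Fhat (p n : nat) (A : mat) (z : nat -> R) : mat :=
  idmat (trace p (Shat p n A z) / INR p).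

(* Main.v *)
Require Import Defs.
From Stdlib Require Import Reals Lra Lia Psatz ClassicalEpsilon FunctionalExtensionality.
Open Scope R_scope.


Definition RInt (f : R -> R) (a b : R) : R :=
  epsilon (inhabits 0) (fun v => exists pr : Riemann_integrable f a b, RiemannInt pr = v).

Lemma RInt_eq f a b (pr : Riemann_integrable f a b) : RInt f a b = RiemannInt pr.
Proof.
  unfold RInt.
  destruct (epsilon_spec (inhabits 0) (fun v => exists pr : Riemann_integrable f a b, RiemannInt pr = v)) as [pr' H].
  - exists (RiemannInt pr); exists pr; reflexivity.
  - rewrite <- H. apply RiemannInt_P5.
Qed.

Lemma cont_int f a b : continuity f -> a <= b -> Riemann_integrable f a b.
Proof. intros Hc Hab. apply continuity_implies_RiemannInt; auto. Qed.

Lemma RInt_lin f g l a b : continuity f -> continuity g -> a <= b ->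
  RInt (fun x => f x + l * g x) a b = RInt f a b + l * RInt g a b.
Proof.
  intros Hf Hg Hab.
  pose proof (cont_int f a b Hf Hab) as p1.
  pose proof (cont_int g a b Hg Hab) as p2.
  rewrite (RInt_eq _ _ _ (RiemannInt_P10 l p1 p2)), (RInt_eq _ _ _ p1), (RInt_eq _ _ _ p2).
  apply RiemannInt_P13.
Qed.

Lemma cont_of_der f f' : (forall x, derivable_pt_lim f x (f' x)) -> continuity f.
Proof. intros H x. apply derivable_continuous_pt. exists (f' x). apply H. Qed.

Lemma RInt_FTC (F f : R -> R) a b : (forall x, derivable_pt_lim F x (f x)) ->
  continuity f -> a <= b -> RInt f a b = F b - F a.
Proof.
  intros HF Hf Hab.
  set (d := (fun x => exist _ (f x) (HF x)) : derivable F).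
  assert (Hc : continuity (derive F d)) by exact Hf.
  set (C := {| c1 := F; diff0 := d; cont1 := Hc |}).
  pose proof (cont_int f a b Hf Hab) as p.
  rewrite (RInt_eq _ _ _ p).
  exact (@FTC_Riemann C a b p).
Qed.

Lemma RInt_le f g a b : continuity f -> continuity g -> a <= b ->
  (forall x, a < x < b -> f x <= g x) -> RInt f a b <= RInt g a b.
Proof.
  intros Hf Hg Hab H.
  pose proof (cont_int f a b Hf Hab) as p1.
  pose proof (cont_int g a b Hg Hab) as p2.
  rewrite (RInt_eq _ _ _ p1), (RInt_eq _ _ _ p2).
  apply RiemannInt_P19; auto.
Qed.

Lemma RInt_chasles f a b c : continuity f -> a <= b -> b <= c ->
  RInt f a b + RInt f b c = RInt f a c.
Proof.
  intros Hf H1 H2.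
  pose proof (cont_int f a b Hf H1) as p1.
  pose proof (cont_int f b c Hf H2) as p2.
  pose proof (cont_int f a c Hf (Rle_trans _ _ _ H1 H2)) as p3.
  rewrite (RInt_eq _ _ _ p1), (RInt_eq _ _ _ p2), (RInt_eq _ _ _ p3).
  apply RiemannInt_P26.
Qed.

Lemma RInt_const c a b : a <= b -> RInt (fun _ => c) a b = c * (b - a).
Proof.
  intros Hab. rewrite (RInt_FTC (fun x => c * x) (fun _ => c)); auto.
  - ring.
  - intro x. pose proof (derivable_pt_lim_scal id c x 1 (derivable_pt_lim_id x)) as H.
    rewrite Rmult_1_r in H. exact H.
  - intro x. apply continuity_const. intros ? ?; reflexivity.
Qed.

Lemma RInt_scal f k a b : continuity f -> a <= b ->
  RInt (fun x => k * f x) a b = k * RInt f a b.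
Proof.
  intros Hf Hab.
  replace (fun x => k * f x) with (fun x => (fun _ => 0) x + k * f x)
    by (apply functional_extensionality; intro; ring).
  rewrite RInt_lin; auto.
  - rewrite RInt_const; auto; ring.
  - apply continuity_const. intros ? ?; reflexivity.
Qed.

Definition cst := / sqrt (2 * PI).

Lemma cst_pos : 0 < cst.
Proof. unfold cst. apply Rinv_0_lt_compat, sqrt_lt_R0. pose proof PI_RGT_0. lra. Qed.

Lemma phi_eq t : std_density t = exp (- (t ^ 2) / 2) * cst.
Proof. reflexivity. Qed.

Lemma phi_pos t : 0 < std_density t.
Proof. rewrite phi_eq. apply Rmult_lt_0_compat; [apply exp_pos | apply cst_pos]. Qed.

Lemma phi_even t : std_density (- t) = std_density t.
Proof. rewrite !phi_eq. replace ((-t)^2) with (t^2) by ring. reflexivity. Qed.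

Lemma d_phi x : derivable_pt_lim std_density x (- x * std_density x).
Proof.
  assert (Hg : derivable_pt_lim (fun t => - (t ^ 2) / 2) x (- x)).
  { replace (fun t => - (t ^ 2) / 2) with (fun t => t ^ 2 * (- / 2))
      by (apply functional_extensionality; intro; field).
    replace (- x) with (INR 2 * x ^ Nat.pred 2 * (- / 2)) by (simpl; field).
    apply derivable_pt_lim_scal_right. apply derivable_pt_lim_pow. }
  assert (He : derivable_pt_lim (comp exp (fun t => - (t ^ 2) / 2)) x
                 (exp (- (x ^ 2) / 2) * (- x))).
  { apply derivable_pt_lim_comp; auto. apply derivable_pt_lim_exp. }
  replace (- x * std_density x) with (exp (- (x ^ 2) / 2) * (- x) * cst)
    by (rewrite phi_eq; ring).
  change std_density with (fun t => comp exp (fun t => - (t ^ 2) / 2) t * cst).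
  apply derivable_pt_lim_scal_right. exact He.
Qed.

Definition h (k : nat) (t : R) : R := t ^ k * std_density t.

Lemma d_h k x : derivable_pt_lim (h k) x
   (INR k * x ^ Nat.pred k * std_density x + x ^ k * (- x * std_density x)).
Proof.
  change (h k) with (mult_fct (fun y => y ^ k) std_density).
  apply derivable_pt_lim_mult. apply derivable_pt_lim_pow. apply d_phi.
Qed.

Lemma cont_phi : continuity std_density.
Proof. exact (cont_of_der _ _ d_phi). Qed.

Lemma cont_h k : continuity (h k).
Proof. exact (cont_of_der _ _ (d_h k)). Qed.

Lemma d_h_S j x : derivable_pt_lim (h (S j)) x (INR (S j) * h j x - h (S (S j)) x).
Proof.
  replace (INR (S j) * h j x - h (S (S j)) x) with
    (INR (S j) * x ^ Nat.pred (S j) * std_density x + x ^ (S j) * (- x * std_density x))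
    by (unfold h; simpl; ring).
  apply d_h.
Qed.

Lemma decay k : (k <= 3)%nat -> forall eps, 0 < eps ->
  exists M, 1 <= M /\ forall t, M <= Rabs t -> Rabs (h k t) < eps.
Proof.
  intros Hk eps He.
  exists (Rmax 1 (16 * cst / eps + 1)). split; [apply Rmax_l|].
  intros t Ht. set (u := Rabs t) in *.
  assert (Hu1 : 1 <= u) by (eapply Rle_trans; [apply Rmax_l| exact Ht]).
  assert (Hu2 : 16 * cst / eps + 1 <= u) by (eapply Rle_trans; [apply Rmax_r| exact Ht]).
  set (E := exp (t ^ 2 / 2)).
  assert (HE : (1 + t^2/4)^2 <= E).
  { unfold E. replace (t^2/2) with (t^2/4 + t^2/4) by field. rewrite exp_plus.
    pose proof (exp_ineq1_le (t^2/4)). assert (0 <= 1 + t^2/4) by (assert (0 <= t^2) by (apply pow2_ge_0); lra).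
    replace ((1+t^2/4)^2) with ((1+t^2/4)*(1+t^2/4)) by ring. apply Rmult_le_compat; lra. }
  assert (Ht2 : t^2 = u^2) by (unfold u; rewrite RPow_abs; rewrite Rabs_right; [reflexivity| apply Rle_ge, pow2_ge_0]).
  assert (HEpos : 0 < E) by apply exp_pos.
  assert (Hh : Rabs (h k t) * E = u ^ k * cst).
  { unfold h. rewrite phi_eq. rewrite Rabs_mult, Rabs_mult.
    rewrite (Rabs_right (exp _)) by (left; apply exp_pos).
    rewrite (Rabs_right cst) by (left; apply cst_pos).
    unfold u. rewrite <- RPow_abs.
    replace (- t ^ 2 / 2) with (- (t^2/2)) by field. rewrite exp_Ropp. unfold E.
    field. apply Rgt_not_eq, exp_pos. }
  apply (Rmult_lt_reg_r E); auto. rewrite Hh.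
  assert (Huk : u ^ k <= u ^ 3) by (apply Rle_pow; auto).
  pose proof cst_pos.
  assert (H16 : 16 * cst < eps * u).
  { assert (16 * cst / eps < u) by lra.
    apply (Rmult_lt_reg_r (/ eps)). apply Rinv_0_lt_compat; auto.
    replace (eps * u * / eps) with u by (field; lra).
    unfold Rdiv in H0. lra. }
  assert (u^4/16 <= E).
  { rewrite Ht2 in HE. replace (u^4/16) with ((u^2/4)^2) by field.
    eapply Rle_trans; [|exact HE]. apply pow_incr.
    assert (0 <= u^2) by apply pow2_ge_0. lra. }
  assert (Hu3 : 0 < u ^ 3) by (apply pow_lt; lra).
  assert (u ^ 3 * cst * 16 < eps * u ^ 4).
  { replace (u ^ 3 * cst * 16) with (u^3 * (16 * cst)) by ring.
    replace (eps * u ^ 4) with (u^3 * (eps * u)) by ring.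
    apply Rmult_lt_compat_l; auto. }
  assert (u ^ k * cst <= u ^ 3 * cst) by (apply Rmult_le_compat_r; lra).
  assert (eps * (u^4/16) <= eps * E) by (apply Rmult_le_compat_l; lra).
  lra.
Qed.

Lemma nat_above M : exists N : nat, M < INR N.
Proof.
  destruct (archimed_cor1 (/ (Rabs M + 1))) as [N [HN1 HN2]].
  { apply Rinv_0_lt_compat. pose proof (Rabs_pos M). lra. }
  exists N. apply lt_0_INR in HN2.
  assert (Rabs M + 1 < INR N).
  { destruct (Rlt_or_le (Rabs M + 1) (INR N)) as [H|H]; auto.
    exfalso. pose proof (Rinv_le_contravar (INR N) (Rabs M + 1) HN2 H). lra. }
  pose proof (Rle_abs M). lra.
Qed.

Lemma cauchy_lim (g : R -> R) :
  (forall eps, 0 < eps -> exists M, forall x y, M <= x -> M <= y -> Rabs (g x - g y) < eps) ->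
  exists l, forall eps, 0 < eps -> exists M, forall x, M <= x -> Rabs (g x - l) < eps.
Proof.
  intros Hc.
  assert (Hcs : Cauchy_crit (fun n => g (INR n))).
  { intros eps He. destruct (Hc eps He) as [M HM]. destruct (nat_above M) as [N HN].
    exists N. intros n m Hn Hm. unfold R_dist. apply HM.
    - apply le_INR in Hn. lra.
    - apply le_INR in Hm. lra. }
  destruct (R_complete _ Hcs) as [l Hl].
  exists l. intros eps He.
  destruct (Hc (eps/2)) as [M HM]; [lra|].
  exists M. intros x Hx.
  destruct (Hl (eps/2)) as [N1 HN1]; [lra|].
  destruct (nat_above M) as [N2 HN2].
  set (n := Nat.max N1 N2).
  assert (Hn1 : (n >= N1)%nat) by lia.
  assert (Hn2 : M <= INR n).
  { assert (N2 <= n)%nat by lia. apply le_INR in H. lra. }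
  specialize (HN1 n Hn1). unfold R_dist in HN1.
  specialize (HM x (INR n) Hx Hn2).
  replace (g x - l) with ((g x - g (INR n)) + (g (INR n) - l)) by ring.
  eapply Rle_lt_trans; [apply Rabs_triang|]. lra.
Qed.

Lemma cont_comb f g a b : continuity f -> continuity g -> continuity (fun x => a * f x + b * g x).
Proof. intros Hf Hg. exact (continuity_plus _ _ (continuity_scal _ a Hf) (continuity_scal _ b Hg)). Qed.

Lemma cont_lin f g b : continuity f -> continuity g -> continuity (fun x => f x + b * g x).
Proof. intros Hf Hg. exact (continuity_plus _ _ Hf (continuity_scal _ b Hg)). Qed.

Lemma cont_zero : continuity (fun _ => 0).
Proof. apply continuity_const. intros ? ?; reflexivity. Qed.

Lemma h0_eq : h 0 = std_density.
Proof. apply functional_extensionality; intro; unfold h; simpl; ring. Qed.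

Lemma tail_r x y : 1 <= x -> x <= y -> 0 <= RInt std_density x y <= std_density x.
Proof.
  intros H1 H2. split.
  - rewrite <- (Rmult_0_l (y - x)). rewrite <- RInt_const; auto.
    apply RInt_le; auto. apply cont_zero. apply cont_phi.
    intros t _. left; apply phi_pos.
  - apply Rle_trans with (RInt (fun t => t * std_density t) x y).
    + apply RInt_le; auto. apply cont_phi.
      * exact (continuity_mult _ _ derivable_continuous_id cont_phi)
          || exact (continuity_mult id std_density (derivable_continuous id derivable_id) cont_phi).
      * intros t Ht. pose proof (phi_pos t). nra.
    + rewrite (RInt_FTC (fun t => - std_density t)); auto.
      * pose proof (phi_pos y). lra.
      * intro t. replace (t * std_density t) with (- (- t * std_density t)) by ring.
        apply (derivable_pt_lim_opp std_density). apply d_phi.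
      * exact (continuity_mult id std_density (derivable_continuous id derivable_id) cont_phi).
Qed.

Lemma cont_mphi : continuity (fun t => - t * std_density t).
Proof. exact (continuity_mult _ std_density (continuity_opp id (derivable_continuous id derivable_id)) cont_phi). Qed.

Lemma tail_l x y : 1 <= x -> x <= y -> 0 <= RInt std_density (-y) (-x) <= std_density x.
Proof.
  intros H1 H2. split.
  - rewrite <- (Rmult_0_l (-x - -y)). rewrite <- RInt_const; [|lra].
    apply RInt_le; [apply cont_zero | apply cont_phi | lra |].
    intros t _. left; apply phi_pos.
  - apply Rle_trans with (RInt (fun t => - t * std_density t) (-y) (-x)).
    + apply RInt_le; [apply cont_phi | apply cont_mphi | lra |].
      intros t Ht. pose proof (phi_pos t). nra.
    + rewrite (RInt_FTC std_density); [| apply d_phi | apply cont_mphi | lra].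
      rewrite phi_even. pose proof (phi_pos (-y)). lra.
Qed.

Definition Impr (f : R -> R) (l : R) := continuity f /\
  forall eps, 0 < eps -> exists M, 0 <= M /\
    forall a b, M <= a -> M <= b -> Rabs (RInt f (-a) b - l) < eps.

Lemma limit_nonneg (g : R -> R) l :
  (forall x, 1 <= x -> 0 <= g x) ->
  (forall eps, 0 < eps -> exists M, forall x, M <= x -> Rabs (g x - l) < eps) -> 0 <= l.
Proof.
  intros Hg Hl. destruct (Rle_or_lt 0 l) as [H|H]; auto.
  destruct (Hl (- l)) as [M HM]; [lra|].
  specialize (HM (Rmax M 1) (Rmax_l _ _)). specialize (Hg (Rmax M 1) (Rmax_r _ _)).
  rewrite Rabs_right in HM; lra.
Qed.

Lemma m0_exists : exists m, 0 < m /\ Impr (h 0) m.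
Proof.
  set (Rf := fun b => RInt std_density 1 b).
  set (Lf := fun a => RInt std_density (-a) (-1)).
  assert (HR : forall eps, 0 < eps -> exists M, forall x y, M <= x -> M <= y -> Rabs (Rf x - Rf y) < eps).
  { intros eps He. destruct (decay 0 ltac:(lia) eps He) as [M [HM1 HM]].
    exists M. intros x y Hx Hy.
    assert (Hgen : forall x y, M <= x -> x <= y -> Rabs (Rf x - Rf y) < eps).
    { clear x y Hx Hy. intros x y Hx Hxy. unfold Rf.
      rewrite <- (RInt_chasles std_density 1 x y); [|apply cont_phi|lra|lra].
      destruct (tail_r x y ltac:(lra) Hxy).
      specialize (HM x). rewrite Rabs_right in HM by lra. unfold h in HM. simpl in HM.
      rewrite Rmult_1_l in HM. specialize (HM Hx). rewrite Rabs_right in HM by (left; apply phi_pos).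
      rewrite Rabs_left1; lra. }
    destruct (Rle_or_lt x y) as [H|H].
    - apply Hgen; auto.
    - rewrite Rabs_minus_sym. apply Hgen; lra. }
  assert (HL : forall eps, 0 < eps -> exists M, forall x y, M <= x -> M <= y -> Rabs (Lf x - Lf y) < eps).
  { intros eps He. destruct (decay 0 ltac:(lia) eps He) as [M [HM1 HM]].
    exists M. intros x y Hx Hy.
    assert (Hgen : forall x y, M <= x -> x <= y -> Rabs (Lf x - Lf y) < eps).
    { clear x y Hx Hy. intros x y Hx Hxy. unfold Lf.
      rewrite <- (RInt_chasles std_density (-y) (-x) (-1)); [|apply cont_phi|lra|lra].
      destruct (tail_l x y ltac:(lra) Hxy).
      specialize (HM x). rewrite Rabs_right in HM by lra. unfold h in HM. simpl in HM.
      rewrite Rmult_1_l in HM. specialize (HM Hx). rewrite Rabs_right in HM by (left; apply phi_pos).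
      rewrite Rabs_left1; lra. }
    destruct (Rle_or_lt x y) as [H|H].
    - apply Hgen; auto.
    - rewrite Rabs_minus_sym. apply Hgen; lra. }
  destruct (cauchy_lim _ HR) as [lR HlR].
  destruct (cauchy_lim _ HL) as [lL HlL].
  set (C := RInt std_density (-1) 1).
  assert (HC : 0 < C).
  { apply Rlt_le_trans with (RInt (fun _ => std_density 1) (-1) 1).
    - rewrite RInt_const by lra. pose proof (phi_pos 1). lra.
    - apply RInt_le; [apply continuity_const; intros ? ?; reflexivity | apply cont_phi | lra |].
      intros t Ht. rewrite !phi_eq. apply Rmult_le_compat_r; [left; apply cst_pos|].
      destruct (Req_dec (t^2) 1) as [E|E].
      + rewrite E. simpl. right. f_equal. field.
      + left. apply exp_increasing. assert (t^2 < 1) by (simpl; nra). simpl in *. lra. }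
  assert (HlR0 : 0 <= lR).
  { apply (limit_nonneg Rf); auto. intros x Hx. unfold Rf. apply (tail_r 1 x); lra. }
  assert (HlL0 : 0 <= lL).
  { apply (limit_nonneg Lf); auto. intros x Hx. unfold Lf. apply (tail_l 1 x); lra. }
  exists (lL + C + lR). split; [lra|].
  rewrite h0_eq. split; [apply cont_phi|].
  intros eps He.
  destruct (HlR (eps/2)) as [M1 HM1]; [lra|].
  destruct (HlL (eps/2)) as [M2 HM2]; [lra|].
  exists (Rmax 1 (Rmax M1 M2)). split.
  { eapply Rle_trans; [|apply Rmax_l]; lra. }
  intros a b Ha Hb.
  assert (1 <= a /\ M1 <= a /\ M2 <= a /\ 1 <= b /\ M1 <= b /\ M2 <= b) as (?&?&?&?&?&?).
  { pose proof (Rmax_l 1 (Rmax M1 M2)); pose proof (Rmax_r 1 (Rmax M1 M2));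
    pose proof (Rmax_l M1 M2); pose proof (Rmax_r M1 M2). repeat split; lra. }
  rewrite <- (RInt_chasles std_density (-a) 1 b); [|apply cont_phi|lra|lra].
  rewrite <- (RInt_chasles std_density (-a) (-1) 1); [|apply cont_phi|lra|lra].
  specialize (HM1 b ltac:(auto)). specialize (HM2 a ltac:(auto)). unfold Rf, Lf in *. fold C.
  replace (RInt std_density (- a) (-1) + C + RInt std_density 1 b - (lL + C + lR))
    with ((RInt std_density (- a) (-1) - lL) + (RInt std_density 1 b - lR)) by ring.
  eapply Rle_lt_trans; [apply Rabs_triang|]. lra.
Qed.

Lemma Rmax_facts M1 M2 : 0 <= Rmax 0 (Rmax M1 M2) /\ M1 <= Rmax 0 (Rmax M1 M2) /\ M2 <= Rmax 0 (Rmax M1 M2).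
Proof.
  pose proof (Rmax_l 0 (Rmax M1 M2)); pose proof (Rmax_r 0 (Rmax M1 M2));
  pose proof (Rmax_l M1 M2); pose proof (Rmax_r M1 M2). repeat split; lra.
Qed.

Lemma Impr_lin f g k l1 l2 : Impr f l1 -> Impr g l2 ->
  Impr (fun x => f x + k * g x) (l1 + k * l2).
Proof.
  intros [Cf Hf] [Cg Hg]. split; [apply cont_lin; auto|].
  intros eps He.
  assert (Hk : 0 < Rabs k + 1) by (pose proof (Rabs_pos k); lra).
  destruct (Hf (eps/2)) as [M1 [_ HM1]]; [lra|].
  destruct (Hg (eps/2/(Rabs k + 1))) as [M2 [_ HM2]].
  { apply Rdiv_lt_0_compat; lra. }
  destruct (Rmax_facts M1 M2) as (H0&H1&H2).
  exists (Rmax 0 (Rmax M1 M2)). split; auto.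
  intros a b Ha Hb.
  rewrite RInt_lin; auto; [|lra].
  specialize (HM1 a b ltac:(lra) ltac:(lra)). specialize (HM2 a b ltac:(lra) ltac:(lra)).
  replace (RInt f (- a) b + k * RInt g (- a) b - (l1 + k * l2)) with
    ((RInt f (- a) b - l1) + k * (RInt g (- a) b - l2)) by ring.
  eapply Rle_lt_trans; [apply Rabs_triang|]. rewrite Rabs_mult.
  assert (Rabs k * Rabs (RInt g (- a) b - l2) <= Rabs k * (eps / 2 / (Rabs k + 1))).
  { apply Rmult_le_compat_l; [apply Rabs_pos|lra]. }
  assert (Rabs k * (eps / 2 / (Rabs k + 1)) < eps / 2).
  { apply (Rmult_lt_reg_r (Rabs k + 1)); auto.
    replace (Rabs k * (eps / 2 / (Rabs k + 1)) * (Rabs k + 1)) with (Rabs k * (eps/2)) by (field; lra).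
    pose proof (Rabs_pos k). nra. }
  lra.
Qed.

Lemma Impr_zero : Impr (fun _ => 0) 0.
Proof.
  split; [apply cont_zero|]. intros eps He. exists 0. split; [lra|].
  intros a b Ha Hb. rewrite RInt_const by lra. rewrite Rmult_0_l, Rminus_0_r, Rabs_R0. auto.
Qed.

Lemma Impr_h1 : Impr (h 1) 0.
Proof.
  split; [apply cont_h|]. intros eps He.
  destruct (decay 0 ltac:(lia) (eps/2)) as [M [HM1 HM]]; [lra|].
  exists M. split; [lra|]. intros a b Ha Hb.
  rewrite (RInt_FTC (fun t => - std_density t)); [| | apply cont_h | lra].
  - rewrite phi_even.
    pose proof (HM a) as HA. pose proof (HM b) as HB.
    unfold h in HA, HB. simpl in HA, HB. rewrite Rmult_1_l in HA, HB.
    rewrite Rabs_right in HA by lra. rewrite Rabs_right in HB by lra.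
    specialize (HA Ha). specialize (HB Hb).
    rewrite Rabs_right in HA by (left; apply phi_pos). rewrite Rabs_right in HB by (left; apply phi_pos).
    pose proof (phi_pos a). pose proof (phi_pos b).
    rewrite Rminus_0_r. apply Rabs_def1; lra.
  - intro t. unfold h. replace (t ^ 1 * std_density t) with (- (- t * std_density t)) by ring.
    apply (derivable_pt_lim_opp std_density). apply d_phi.
Qed.

Lemma d_h_S' j x : derivable_pt_lim (h (S j)) x (INR (S j) * h j x + (-1) * h (S (S j)) x).
Proof.
  replace (INR (S j) * h j x + (-1) * h (S (S j)) x) with
    (INR (S j) * x ^ Nat.pred (S j) * std_density x + x ^ (S j) * (- x * std_density x))
    by (unfold h; simpl; ring).
  apply d_h.
Qed.

Lemma Impr_rec j l : (j <= 2)%nat -> Impr (h j) l -> Impr (h (S (S j))) (INR (S j) * l).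
Proof.
  intros Hj [Cj Hl]. split; [apply cont_h|].
  intros eps He.
  destruct (Hl (eps / 2 / (INR (S j)))) as [M1 [HM10 HM1]].
  { apply Rdiv_lt_0_compat; [lra| apply lt_0_INR; lia]. }
  destruct (decay (S j) ltac:(lia) (eps/4)) as [M2 [HM20 HM2]]; [lra|].
  destruct (Rmax_facts M1 M2) as (H0&H1&H2).
  exists (Rmax 0 (Rmax M1 M2)). split; auto. intros a b Ha Hb.
  set (D := fun x => INR (S j) * h j x + (-1) * h (S (S j)) x).
  assert (CD : continuity D) by (apply cont_comb; apply cont_h).
  replace (h (S (S j))) with (fun x => (fun x => INR (S j) * h j x) x + (-1) * D x)
    by (apply functional_extensionality; intro; unfold D; ring).
  rewrite RInt_lin; [| exact (continuity_scal _ (INR (S j)) (cont_h j)) | exact CD | lra].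
  rewrite RInt_scal; [|apply cont_h|lra].
  rewrite (RInt_FTC (h (S j)) D); [|apply d_h_S' | exact CD | lra].
  specialize (HM1 a b ltac:(lra) ltac:(lra)).
  pose proof (HM2 b) as HB. pose proof (HM2 (-a)) as HA.
  rewrite Rabs_right in HB by lra. rewrite Rabs_Ropp, Rabs_right in HA by lra.
  specialize (HA ltac:(lra)). specialize (HB ltac:(lra)).
  assert (Hn : 0 < INR (S j)) by (apply lt_0_INR; lia).
  assert (Rabs (INR (S j) * RInt (h j) (- a) b - INR (S j) * l) < eps / 2).
  { rewrite <- Rmult_minus_distr_l, Rabs_mult, Rabs_right by lra.
    apply (Rmult_lt_reg_r (/ INR (S j))). apply Rinv_0_lt_compat; auto.
    replace (INR (S j) * Rabs (RInt (h j) (- a) b - l) * / INR (S j)) with (Rabs (RInt (h j) (- a) b - l)) by (field; lra).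
    unfold Rdiv in HM1. lra. }
  replace (INR (S j) * RInt (h j) (- a) b + -1 * (h (S j) b - h (S j) (- a)) - INR (S j) * l)
    with ((INR (S j) * RInt (h j) (- a) b - INR (S j) * l) + (- h (S j) b + h (S j) (-a))) by ring.
  eapply Rle_lt_trans; [apply Rabs_triang|].
  assert (Rabs (- h (S j) b + h (S j) (- a)) < eps/2).
  { eapply Rle_lt_trans; [apply Rabs_triang|]. rewrite Rabs_Ropp. lra. }
  lra.
Qed.

Lemma Impr_impr f l : Impr f l -> improper_integral f l.
Proof.
  intros [Cf Hf] eps He. destruct (Hf eps He) as [M [HM0 HM]].
  exists M. intros a b Ha Hb.
  exists (cont_int f (-a) b Cf ltac:(lra)).
  rewrite <- RInt_eq. auto.
Qed.

Lemma impr_unique f l1 l2 : improper_integral f l1 -> improper_integral f l2 -> l1 = l2.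
Proof.
  intros H1 H2.
  destruct (Req_dec l1 l2) as [E|E]; auto. exfalso.
  set (d := Rabs (l1 - l2)).
  assert (Hd : 0 < d) by (apply Rabs_pos_lt; lra).
  destruct (H1 (d/2)) as [M1 HM1]; [lra|].
  destruct (H2 (d/2)) as [M2 HM2]; [lra|].
  set (a := Rmax M1 M2).
  destruct (HM1 a a (Rmax_l _ _) (Rmax_l _ _)) as [p1 Hp1].
  destruct (HM2 a a (Rmax_r _ _) (Rmax_r _ _)) as [p2 Hp2].
  rewrite (RiemannInt_P5 p1 p2) in Hp1.
  assert (Rabs (l1 - l2) <= Rabs (RiemannInt p2 - l2) + Rabs (RiemannInt p2 - l1)).
  { replace (l1 - l2) with ((RiemannInt p2 - l2) - (RiemannInt p2 - l1)) by ring.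
    eapply Rle_trans; [apply Rabs_triang|]. rewrite Rabs_Ropp. lra. }
  fold d in H. lra.
Qed.

Lemma gauss1_val g l : improper_integral (fun t => g t * std_density t) l -> gauss1 g = l.
Proof.
  intros H. unfold gauss1.
  apply (impr_unique (fun t => g t * std_density t)); auto.
  apply epsilon_spec. exists l; auto.
Qed.

Definition m0 : R := epsilon (inhabits 0) (fun m => 0 < m /\ Impr (h 0) m).

Lemma m0_spec : 0 < m0 /\ Impr (h 0) m0.
Proof. unfold m0. apply epsilon_spec. apply m0_exists. Qed.

Lemma m0_pos : 0 < m0.
Proof. apply m0_spec. Qed.

Lemma gauss_poly c0 c1 c2 c3 c4 :
  improper_integral (fun t => (c0 + c1 * t + c2 * t^2 + c3 * t^3 + c4 * t^4) * std_density t)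
    (m0 * (c0 + c2 + 3 * c4)) /\
  gauss1 (fun t => c0 + c1 * t + c2 * t^2 + c3 * t^3 + c4 * t^4) = m0 * (c0 + c2 + 3 * c4).
Proof.
  destruct m0_spec as [_ I0].
  pose proof Impr_h1 as I1.
  pose proof (Impr_rec 0 m0 ltac:(lia) I0) as I2.
  pose proof (Impr_rec 1 0 ltac:(lia) I1) as I3.
  pose proof (Impr_rec 2 _ ltac:(lia) I2) as I4.
  pose proof (Impr_lin _ _ c0 _ _ Impr_zero I0) as J0.
  pose proof (Impr_lin _ _ c1 _ _ J0 I1) as J1.
  pose proof (Impr_lin _ _ c2 _ _ J1 I2) as J2.
  pose proof (Impr_lin _ _ c3 _ _ J2 I3) as J3.
  pose proof (Impr_lin _ _ c4 _ _ J3 I4) as J4.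
  apply Impr_impr in J4.
  match type of J4 with improper_integral ?F ?L =>
    replace F with (fun t => (c0 + c1 * t + c2 * t^2 + c3 * t^3 + c4 * t^4) * std_density t) in J4
      by (apply functional_extensionality; intro; unfold h; simpl; ring);
    replace L with (m0 * (c0 + c2 + 3 * c4)) in J4 by (simpl; ring) end.
  split; auto. apply gauss1_val; auto.
Qed.

Lemma sumn_ext m f g : (forall i, (i < m)%nat -> f i = g i) -> sumn m f = sumn m g.
Proof.
  induction m; intros H; simpl; auto.
  rewrite IHm by (intros; apply H; lia). rewrite H by lia. reflexivity.
Qed.

Lemma sumn_plus m f g : sumn m (fun i => f i + g i) = sumn m f + sumn m g.
Proof. induction m; simpl; [ring|]. rewrite IHm. ring. Qed.

Lemma sumn_scal m c f : sumn m (fun i => c * f i) = c * sumn m f.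
Proof. induction m; simpl; [ring|]. rewrite IHm. ring. Qed.

Lemma sumn_zero m : sumn m (fun _ => 0) = 0.
Proof. induction m; simpl; [ring|]. rewrite IHm. ring. Qed.

Lemma sumn_const m c : sumn m (fun _ => c) = INR m * c.
Proof. induction m; simpl sumn; [simpl; ring|]. rewrite IHm. rewrite S_INR. ring. Qed.

Lemma sumn_delta m i f : (i < m)%nat -> sumn m (fun j => if Nat.eqb j i then f j else 0) = f i.
Proof.
  induction m; intros H; [lia|]. simpl.
  destruct (Nat.eq_dec i m) as [E|E].
  - subst. rewrite Nat.eqb_refl.
    rewrite (sumn_ext _ _ (fun _ => 0)). rewrite sumn_zero; ring.
    intros j Hj. destruct (Nat.eqb_spec j m); [lia|reflexivity].
  - rewrite IHm by lia. destruct (Nat.eqb_spec m i); [lia|ring].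
Qed.

Lemma sumn_delta' m i f : (i < m)%nat -> sumn m (fun j => if Nat.eqb i j then f j else 0) = f i.
Proof.
  intros H. rewrite <- (sumn_delta m i f H). apply sumn_ext. intros j _.
  rewrite Nat.eqb_sym. reflexivity.
Qed.

Lemma sumn_mul m m' f g : sumn m f * sumn m' g = sumn m (fun i => sumn m' (fun j => f i * g j)).
Proof.
  induction m; simpl; [ring|]. rewrite <- IHm. rewrite sumn_scal. ring.
Qed.

Lemma sumn_swap m m' f : sumn m (fun i => sumn m' (fun j => f i j)) = sumn m' (fun j => sumn m (fun i => f i j)).
Proof.
  induction m; simpl.
  - rewrite sumn_zero. reflexivity.
  - rewrite IHm. rewrite <- sumn_plus. reflexivity.
Qed.

Lemma sumn_add a b f : sumn (a + b) f = sumn a f + sumn b (fun k => f (a + k)%nat).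
Proof.
  induction b; simpl.
  - rewrite Nat.add_0_r. ring.
  - rewrite Nat.add_succ_r. simpl. rewrite IHb. ring.
Qed.

Lemma sumn_block m p f : sumn (m * p) f = sumn m (fun i => sumn p (fun k => f (i * p + k)%nat)).
Proof.
  induction m; simpl; auto.
  rewrite Nat.add_comm, sumn_add, IHm. reflexivity.
Qed.

Lemma sumn_nonneg m f : (forall i, (i < m)%nat -> 0 <= f i) -> 0 <= sumn m f.
Proof.
  induction m; intros H; simpl; [lra|].
  pose proof (H m ltac:(lia)). pose proof (IHm ltac:(intros; apply H; lia)). lra.
Qed.

Lemma sumn_ge_term m f i : (forall i, (i < m)%nat -> 0 <= f i) -> (i < m)%nat -> f i <= sumn m f.
Proof.
  induction m; intros H Hi; [lia|]. simpl.
  destruct (Nat.eq_dec i m) as [E|E].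
  - subst. pose proof (sumn_nonneg m f ltac:(intros; apply H; lia)). lra.
  - pose proof (IHm ltac:(intros; apply H; lia) ltac:(lia)). pose proof (H m ltac:(lia)). lra.
Qed.

Fixpoint Good (N : nat) (f : (nat -> R) -> R) : Prop :=
  match N with
  | O => True
  | S N' => (forall z, exists l, improper_integral (fun t => f (upd z N' t) * std_density t) l) /\
            Good N' (fun z => gauss1 (fun t => f (upd z N' t)))
  end.

Lemma impr_lin f g k l1 l2 : improper_integral f l1 -> improper_integral g l2 ->
  improper_integral (fun x => f x + k * g x) (l1 + k * l2).
Proof.
  intros Hf Hg eps He.
  assert (Hk : 0 < Rabs k + 1) by (pose proof (Rabs_pos k); lra).
  destruct (Hf (eps/2)) as [M1 HM1]; [lra|].
  destruct (Hg (eps/2/(Rabs k + 1))) as [M2 HM2].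
  { apply Rdiv_lt_0_compat; lra. }
  exists (Rmax M1 M2). intros a b Ha Hb.
  destruct (HM1 a b ltac:(eapply Rle_trans; [apply Rmax_l|exact Ha]) ltac:(eapply Rle_trans; [apply Rmax_l|exact Hb])) as [p1 H1].
  destruct (HM2 a b ltac:(eapply Rle_trans; [apply Rmax_r|exact Ha]) ltac:(eapply Rle_trans; [apply Rmax_r|exact Hb])) as [p2 H2].
  exists (RiemannInt_P10 k p1 p2). rewrite (RiemannInt_P13 p1 p2).
  replace (RiemannInt p1 + k * RiemannInt p2 - (l1 + k * l2)) with
    ((RiemannInt p1 - l1) + k * (RiemannInt p2 - l2)) by ring.
  eapply Rle_lt_trans; [apply Rabs_triang|]. rewrite Rabs_mult.
  assert (Rabs k * Rabs (RiemannInt p2 - l2) <= Rabs k * (eps / 2 / (Rabs k + 1))).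
  { apply Rmult_le_compat_l; [apply Rabs_pos|lra]. }
  assert (Rabs k * (eps / 2 / (Rabs k + 1)) < eps / 2).
  { apply (Rmult_lt_reg_r (Rabs k + 1)); auto.
    replace (Rabs k * (eps / 2 / (Rabs k + 1)) * (Rabs k + 1)) with (Rabs k * (eps/2)) by (field; lra).
    pose proof (Rabs_pos k). nra. }
  lra.
Qed.

Lemma gauss1_lin f g k :
  (exists l, improper_integral (fun t => f t * std_density t) l) ->
  (exists l, improper_integral (fun t => g t * std_density t) l) ->
  (exists l, improper_integral (fun t => (f t + k * g t) * std_density t) l) /\
  gauss1 (fun t => f t + k * g t) = gauss1 f + k * gauss1 g.
Proof.
  intros [l1 H1] [l2 H2].
  pose proof (impr_lin _ _ k _ _ H1 H2) as H. cbv beta in H.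
  replace (fun x => f x * std_density x + k * (g x * std_density x))
    with (fun t => (f t + k * g t) * std_density t) in H
    by (apply functional_extensionality; intro; ring).
  split; [exists (l1 + k * l2); auto|].
  rewrite (gauss1_val _ _ H), (gauss1_val _ _ H1), (gauss1_val _ _ H2). reflexivity.
Qed.

Lemma Good_lin N : forall f g k, Good N f -> Good N g ->
  Good N (fun z => f z + k * g z) /\ gexp N (fun z => f z + k * g z) = gexp N f + k * gexp N g.
Proof.
  induction N; intros f g k Hf Hg.
  - split; simpl; auto.
  - destruct Hf as [If Gf]. destruct Hg as [Ig Gg].
    assert (E : (fun z => gauss1 (fun t => f (upd z N t) + k * g (upd z N t))) =
                (fun z => gauss1 (fun t => f (upd z N t)) + k * gauss1 (fun t => g (upd z N t)))).
    { apply functional_extensionality; intro z.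
      apply (gauss1_lin (fun t => f (upd z N t)) (fun t => g (upd z N t))); auto. }
    destruct (IHN _ _ k Gf Gg) as [G1 G2].
    split.
    + split.
      * intro z. apply (gauss1_lin (fun t => f (upd z N t)) (fun t => g (upd z N t))); auto.
      * cbv beta. rewrite E. exact G1.
    + simpl. rewrite E. exact G2.
Qed.

Lemma gauss1_const c : (exists l, improper_integral (fun t => c * std_density t) l) /\ gauss1 (fun _ => c) = m0 * c.
Proof.
  destruct (gauss_poly c 0 0 0 0) as [H1 H2].
  replace (fun t => (c + 0 * t + 0 * t ^ 2 + 0 * t ^ 3 + 0 * t ^ 4) * std_density t)
    with (fun t => c * std_density t) in H1 by (apply functional_extensionality; intro; ring).
  replace (fun t => c + 0 * t + 0 * t ^ 2 + 0 * t ^ 3 + 0 * t ^ 4) with (fun _ : R => c) in H2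
    by (apply functional_extensionality; intro; ring).
  split; [eexists; exact H1 | rewrite H2; ring].
Qed.

Lemma Good_const N c : Good N (fun _ => c) /\ gexp N (fun _ => c) = m0 ^ N * c.
Proof.
  revert c. induction N; intros c.
  - split; simpl; auto; ring.
  - destruct (gauss1_const c) as [I G].
    assert (E : (fun z : nat -> R => gauss1 (fun _ : R => c)) = (fun _ => m0 * c))
      by (apply functional_extensionality; intro; exact G).
    destruct (IHN (m0 * c)) as [G1 G2].
    split.
    + split; [intro; exact I|]. cbv beta. rewrite E. exact G1.
    + simpl. rewrite E, G2. ring.
Qed.

Lemma Good_add N f g : Good N f -> Good N g ->
  Good N (fun z => f z + g z) /\ gexp N (fun z => f z + g z) = gexp N f + gexp N g.
Proof.
  intros Hf Hg. destruct (Good_lin N f g 1 Hf Hg) as [A B].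
  replace (fun z => f z + 1 * g z) with (fun z => f z + g z) in A, B
    by (apply functional_extensionality; intro; ring).
  split; auto. rewrite B; ring.
Qed.

Lemma Good_scal N f k : Good N f ->
  Good N (fun z => k * f z) /\ gexp N (fun z => k * f z) = k * gexp N f.
Proof.
  intros Hf. destruct (Good_const N 0) as [C0 C1].
  destruct (Good_lin N _ f k C0 Hf) as [A B].
  replace (fun z => 0 + k * f z) with (fun z => k * f z) in A, B
    by (apply functional_extensionality; intro; ring).
  split; auto. rewrite B, C1; ring.
Qed.

Lemma Good_sumn N m F : (forall i, (i < m)%nat -> Good N (F i)) ->
  Good N (fun z => sumn m (fun i => F i z)) /\
  gexp N (fun z => sumn m (fun i => F i z)) = sumn m (fun i => gexp N (F i)).
Proof.
  induction m; intros H.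
  - simpl. destruct (Good_const N 0) as [C0 C1]. split; auto. rewrite C1; ring.
  - destruct IHm as [G1 G2]; [intros; apply H; lia|].
    destruct (Good_add N _ (F m) G1 (H m ltac:(lia))) as [A B].
    simpl. split; auto. rewrite B, G2. reflexivity.
Qed.

Lemma Good_ext N f g : (forall z, f z = g z) -> Good N f -> Good N g /\ gexp N g = gexp N f.
Proof.
  intros H Hf. replace g with f by (apply functional_extensionality; auto). auto.
Qed.

Lemma impr_ext f g l : (forall t, f t = g t) -> improper_integral g l -> improper_integral f l.
Proof. intros H. replace f with g; auto. apply functional_extensionality; intro; auto. Qed.

Lemma Good_ext' N f g : Good N f -> (forall z, f z = g z) -> Good N g /\ gexp N g = gexp N f.
Proof. intros Hf H. apply Good_ext; auto. Qed.

Definition aff (N : nat) (c : R) (u : nat -> R) (z : nat -> R) : R := c + sumn N (fun a => u a * z a).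
Definition ip (N : nat) (u v : nat -> R) : R := sumn N (fun a => u a * v a).
Definition z0 : nat -> R := fun _ => 0.

Definition Wk (c1 c2 c3 c4 i12 i13 i14 i23 i24 i34 : R) : R :=
  c1*c2*c3*c4 + c3*c4*i12 + c2*c4*i13 + c2*c3*i14 + c1*c4*i23 + c1*c3*i24 + c1*c2*i34
  + i12*i34 + i13*i24 + i14*i23.

Definition P4 N c1 u1 c2 u2 c3 u3 c4 u4 (z : nat -> R) : R :=
  aff N c1 u1 z * aff N c2 u2 z * aff N c3 u3 z * aff N c4 u4 z.

Lemma aff_upd N c u z t : aff (S N) c u (upd z N t) = aff N c u z + u N * t.
Proof.
  unfold aff. simpl. unfold upd at 2. rewrite Nat.eqb_refl.
  rewrite (sumn_ext N _ (fun a => u a * z a)). ring.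
  intros a Ha. unfold upd. destruct (Nat.eqb_spec a N); [lia|reflexivity].
Qed.

Lemma aff_z0 N c z : aff N c z0 z = c.
Proof.
  unfold aff, z0. rewrite (sumn_ext N _ (fun _ => 0)) by (intros; ring). rewrite sumn_zero; ring.
Qed.

Lemma ip_z0l N u : ip N z0 u = 0.
Proof. unfold ip, z0. rewrite (sumn_ext N _ (fun _ => 0)) by (intros; ring). apply sumn_zero. Qed.

Lemma ip_z0r N u : ip N u z0 = 0.
Proof. unfold ip, z0. rewrite (sumn_ext N _ (fun _ => 0)) by (intros; ring). apply sumn_zero. Qed.

Lemma prod4 N : forall c1 u1 c2 u2 c3 u3 c4 u4,
  Good N (P4 N c1 u1 c2 u2 c3 u3 c4 u4) /\
  gexp N (P4 N c1 u1 c2 u2 c3 u3 c4 u4) =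
   m0 ^ N * Wk c1 c2 c3 c4 (ip N u1 u2) (ip N u1 u3) (ip N u1 u4) (ip N u2 u3) (ip N u2 u4) (ip N u3 u4).
Proof.
  induction N; intros c1 u1 c2 u2 c3 u3 c4 u4.
  - split; simpl; auto. unfold P4, aff, ip, Wk. simpl. ring.
  - set (b1 := u1 N). set (b2 := u2 N). set (b3 := u3 N). set (b4 := u4 N).
    set (T0 := P4 N c1 u1 c2 u2 c3 u3 c4 u4).
    set (T1 := P4 N (b1*b2) z0 1 z0 c3 u3 c4 u4).
    set (T2 := P4 N (b1*b3) z0 1 z0 c2 u2 c4 u4).
    set (T3 := P4 N (b1*b4) z0 1 z0 c2 u2 c3 u3).
    set (T4 := P4 N (b2*b3) z0 1 z0 c1 u1 c4 u4).
    set (T5 := P4 N (b2*b4) z0 1 z0 c1 u1 c3 u3).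
    set (T6 := P4 N (b3*b4) z0 1 z0 c1 u1 c2 u2).
    set (T7 := P4 N (3*(b1*b2*b3*b4)) z0 1 z0 1 z0 1 z0).
    assert (Hpoly : forall z, (fun t => P4 (S N) c1 u1 c2 u2 c3 u3 c4 u4 (upd z N t)) =
      (fun t =>
        let A1 := aff N c1 u1 z in let A2 := aff N c2 u2 z in
        let A3 := aff N c3 u3 z in let A4 := aff N c4 u4 z in
        A1*A2*A3*A4
        + (b1*A2*A3*A4 + A1*b2*A3*A4 + A1*A2*b3*A4 + A1*A2*A3*b4) * t
        + (b1*b2*A3*A4 + b1*A2*b3*A4 + b1*A2*A3*b4 + A1*b2*b3*A4 + A1*b2*A3*b4 + A1*A2*b3*b4) * t^2
        + (b1*b2*b3*A4 + b1*b2*A3*b4 + b1*A2*b3*b4 + A1*b2*b3*b4) * t^3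
        + (b1*b2*b3*b4) * t^4)).
    { intro z. apply functional_extensionality; intro t. unfold P4. rewrite !aff_upd.
      unfold b1, b2, b3, b4. simpl. ring. }
    assert (Hin : (fun z => gauss1 (fun t => P4 (S N) c1 u1 c2 u2 c3 u3 c4 u4 (upd z N t))) =
      (fun z => m0 * (((((((T0 z + T1 z) + T2 z) + T3 z) + T4 z) + T5 z) + T6 z) + T7 z))).
    { apply functional_extensionality; intro z. rewrite Hpoly. cbv zeta.
      erewrite (proj2 (gauss_poly _ _ _ _ _)).
      unfold T0, T1, T2, T3, T4, T5, T6, T7, P4. rewrite !aff_z0. ring. }
    destruct (IHN c1 u1 c2 u2 c3 u3 c4 u4) as [G0 E0].
    destruct (IHN (b1*b2) z0 1 z0 c3 u3 c4 u4) as [G1 E1].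
    destruct (IHN (b1*b3) z0 1 z0 c2 u2 c4 u4) as [G2 E2].
    destruct (IHN (b1*b4) z0 1 z0 c2 u2 c3 u3) as [G3 E3].
    destruct (IHN (b2*b3) z0 1 z0 c1 u1 c4 u4) as [G4 E4].
    destruct (IHN (b2*b4) z0 1 z0 c1 u1 c3 u3) as [G5 E5].
    destruct (IHN (b3*b4) z0 1 z0 c1 u1 c2 u2) as [G6 E6].
    destruct (IHN (3*(b1*b2*b3*b4)) z0 1 z0 1 z0 1 z0) as [G7 E7].
    fold T0 in G0, E0. fold T1 in G1, E1. fold T2 in G2, E2. fold T3 in G3, E3.
    fold T4 in G4, E4. fold T5 in G5, E5. fold T6 in G6, E6. fold T7 in G7, E7.
    destruct (Good_add N _ _ G0 G1) as [H1 F1].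
    destruct (Good_add N _ _ H1 G2) as [H2 F2].
    destruct (Good_add N _ _ H2 G3) as [H3 F3].
    destruct (Good_add N _ _ H3 G4) as [H4 F4].
    destruct (Good_add N _ _ H4 G5) as [H5 F5].
    destruct (Good_add N _ _ H5 G6) as [H6 F6].
    destruct (Good_add N _ _ H6 G7) as [H7 F7].
    destruct (Good_scal N _ m0 H7) as [H8 F8].
    split.
    + split.
      * intro z. eexists. eapply impr_ext. 2:{ eapply proj1. apply gauss_poly. }
        intro t. rewrite (equal_f (Hpoly z) t). cbv beta zeta. reflexivity.
      * rewrite Hin. exact H8.
    + simpl gexp. rewrite Hin, F8, F7, F6, F5, F4, F3, F2, F1, E0, E1, E2, E3, E4, E5, E6, E7.
      rewrite ?ip_z0l, ?ip_z0r. unfold ip. simpl sumn. fold (ip N u1 u2) (ip N u1 u3) (ip N u1 u4) (ip N u2 u3) (ip N u2 u4) (ip N u3 u4).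
      unfold Wk, b1, b2, b3, b4. simpl. ring.
Qed.

Lemma divmod p i k : (k < p)%nat -> ((i*p+k)/p = i /\ (i*p+k) mod p = k)%nat.
Proof.
  intros H. split.
  - rewrite Nat.add_comm. rewrite Nat.div_add by lia. rewrite Nat.div_small by lia. lia.
  - rewrite Nat.add_comm. rewrite Nat.Div0.mod_add. apply Nat.mod_small; lia.
Qed.

Definition cf (p : nat) (A : mat) (i j : nat) : nat -> R :=
  fun a => if Nat.eqb (a / p) i then A j (a mod p) else 0.

Lemma sample_aff p n A z i j : (i < n)%nat ->
  sample p A z i j = aff (n * p) 0 (cf p A i j) z.
Proof.
  intros Hi. unfold aff. rewrite sumn_block. rewrite Rplus_0_l.
  rewrite (sumn_ext n _ (fun i' => if Nat.eqb i' i then sumn p (fun k => A j k * z (i' * p + k)%nat) else 0)).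
  - rewrite sumn_delta by auto. reflexivity.
  - intros i' Hi'. destruct (Nat.eqb_spec i' i).
    + subst. apply sumn_ext. intros k Hk. unfold cf. destruct (divmod p i k Hk) as [E1 E2].
      rewrite E1, E2, Nat.eqb_refl. reflexivity.
    + rewrite (sumn_ext p _ (fun _ => 0)); [apply sumn_zero|].
      intros k Hk. unfold cf. destruct (divmod p i' k Hk) as [E1 E2].
      rewrite E1. destruct (Nat.eqb_spec i' i); [lia|ring].
Qed.

Lemma ip_cf p n A Sigma i i' j j' :
  (forall j k, (j < p)%nat -> (k < p)%nat -> Sigma j k = sumn p (fun l => A j l * A k l)) ->
  (i < n)%nat -> (i' < n)%nat -> (j < p)%nat -> (j' < p)%nat ->
  ip (n * p) (cf p A i j) (cf p A i' j') = if Nat.eqb i i' then Sigma j j' else 0.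
Proof.
  intros hA Hi Hi' Hj Hj'. unfold ip. rewrite sumn_block.
  destruct (Nat.eqb_spec i i').
  - subst i'. rewrite hA by auto.
    rewrite (sumn_ext n _ (fun i'' => if Nat.eqb i'' i then sumn p (fun l => A j l * A j' l) else 0)).
    + apply sumn_delta; auto.
    + intros i'' Hi''. destruct (Nat.eqb_spec i'' i).
      * subst. apply sumn_ext. intros k Hk. unfold cf. destruct (divmod p i k Hk) as [E1 E2].
        rewrite E1, E2, Nat.eqb_refl. reflexivity.
      * rewrite (sumn_ext p _ (fun _ => 0)); [apply sumn_zero|].
        intros k Hk. unfold cf. destruct (divmod p i'' k Hk) as [E1 E2].
        rewrite E1. destruct (Nat.eqb_spec i'' i); [lia|ring].
  - rewrite (sumn_ext n _ (fun _ => 0)); [apply sumn_zero|].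
    intros i'' Hi''. rewrite (sumn_ext p _ (fun _ => 0)); [apply sumn_zero|].
    intros k Hk. unfold cf. destruct (divmod p i'' k Hk) as [E1 E2].
    rewrite E1. destruct (Nat.eqb_spec i'' i); destruct (Nat.eqb_spec i'' i'); try ring. lia.
Qed.

Lemma Ex2 p n A Sigma i i' j j' :
  (forall j k, (j < p)%nat -> (k < p)%nat -> Sigma j k = sumn p (fun l => A j l * A k l)) ->
  (i < n)%nat -> (i' < n)%nat -> (j < p)%nat -> (j' < p)%nat ->
  Good (n * p) (fun z => sample p A z i j * sample p A z i' j') /\
  gexp (n * p) (fun z => sample p A z i j * sample p A z i' j') =
    m0 ^ (n * p) * (if Nat.eqb i i' then Sigma j j' else 0).
Proof.
  intros hA Hi Hi' Hj Hj'.
  destruct (prod4 (n*p) 1 z0 1 z0 0 (cf p A i j) 0 (cf p A i' j')) as [G E].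
  assert (Hpt : forall z, P4 (n*p) 1 z0 1 z0 0 (cf p A i j) 0 (cf p A i' j') z = sample p A z i j * sample p A z i' j')
    by (intro z; unfold P4; rewrite !aff_z0, !(sample_aff p n) by auto; ring).
  destruct (Good_ext (n*p) _ _ Hpt G) as [G' E'].
  split; auto. rewrite E', E. rewrite ?ip_z0l, ?ip_z0r. rewrite ip_cf with (Sigma := Sigma) by auto.
  unfold Wk. ring.
Qed.

Lemma Ex4 p n A Sigma i i' j k l m :
  (forall j k, (j < p)%nat -> (k < p)%nat -> Sigma j k = sumn p (fun l => A j l * A k l)) ->
  (i < n)%nat -> (i' < n)%nat -> (j < p)%nat -> (k < p)%nat -> (l < p)%nat -> (m < p)%nat ->
  Good (n * p) (fun z => sample p A z i j * sample p A z i k * (sample p A z i' l * sample p A z i' m)) /\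
  gexp (n * p) (fun z => sample p A z i j * sample p A z i k * (sample p A z i' l * sample p A z i' m)) =
    m0 ^ (n * p) * (Sigma j k * Sigma l m + if Nat.eqb i i' then Sigma j l * Sigma k m + Sigma j m * Sigma k l else 0).
Proof.
  intros hA Hi Hi' Hj Hk Hl Hm.
  destruct (prod4 (n*p) 0 (cf p A i j) 0 (cf p A i k) 0 (cf p A i' l) 0 (cf p A i' m)) as [G E].
  assert (Hpt : forall z, P4 (n*p) 0 (cf p A i j) 0 (cf p A i k) 0 (cf p A i' l) 0 (cf p A i' m) z = sample p A z i j * sample p A z i k * (sample p A z i' l * sample p A z i' m))
    by (intro z; unfold P4; rewrite !(sample_aff p n) by auto; ring).
  destruct (Good_ext (n*p) _ _ Hpt G) as [G' E'].
  split; auto. rewrite E', E. rewrite !ip_cf with (Sigma := Sigma) by auto.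
  rewrite !Nat.eqb_refl. unfold Wk. destruct (Nat.eqb i i'); ring.
Qed.

Lemma sumn_if_const n i c d : (i < n)%nat ->
  sumn n (fun i' => c + (if Nat.eqb i i' then d else 0)) = INR n * c + d.
Proof.
  intros Hi. rewrite sumn_plus, sumn_const, sumn_delta'; auto.
Qed.

Lemma ES p n A Sigma j k :
  (forall j k, (j < p)%nat -> (k < p)%nat -> Sigma j k = sumn p (fun l => A j l * A k l)) ->
  (1 <= n)%nat -> (j < p)%nat -> (k < p)%nat ->
  Good (n * p) (fun z => Shat p n A z j k) /\
  gexp (n * p) (fun z => Shat p n A z j k) = m0 ^ (n * p) * Sigma j k.
Proof.
  intros hA hn Hj Hk.
  destruct (Good_sumn (n*p) n (fun i z => sample p A z i j * sample p A z i k)) as [G1 E1].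
  { intros i Hi. apply (Ex2 p n A Sigma); auto. }
  destruct (Good_scal (n*p) _ (/ INR n) G1) as [G2 E2].
  destruct (Good_ext' (n*p) _ (fun z => Shat p n A z j k) G2) as [G3 E3].
  { intros; reflexivity. }
  split; auto. rewrite E3, E2, E1.
  rewrite (sumn_ext n _ (fun _ => m0 ^ (n * p) * Sigma j k)).
  - rewrite sumn_const. assert (0 < INR n) by (apply lt_0_INR; lia). field. lra.
  - intros i Hi. rewrite (proj2 (Ex2 p n A Sigma i i j k hA Hi Hi Hj Hk)). rewrite Nat.eqb_refl. reflexivity.
Qed.

Lemma ESS p n A Sigma j k l m :
  (forall j k, (j < p)%nat -> (k < p)%nat -> Sigma j k = sumn p (fun l => A j l * A k l)) ->
  (1 <= n)%nat -> (j < p)%nat -> (k < p)%nat -> (l < p)%nat -> (m < p)%nat ->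
  Good (n * p) (fun z => Shat p n A z j k * Shat p n A z l m) /\
  gexp (n * p) (fun z => Shat p n A z j k * Shat p n A z l m) =
    m0 ^ (n * p) * (Sigma j k * Sigma l m + / INR n * (Sigma j l * Sigma k m + Sigma j m * Sigma k l)).
Proof.
  intros hA hn Hj Hk Hl Hm.
  set (F := fun i z => sumn n (fun i' => sample p A z i j * sample p A z i k * (sample p A z i' l * sample p A z i' m))).
  assert (HF : forall i, (i < n)%nat -> Good (n*p) (F i) /\
     gexp (n*p) (F i) = m0 ^ (n*p) * (INR n * (Sigma j k * Sigma l m) + (Sigma j l * Sigma k m + Sigma j m * Sigma k l))).
  { intros i Hi.
    destruct (Good_sumn (n*p) n (fun i' z => sample p A z i j * sample p A z i k * (sample p A z i' l * sample p A z i' m))) as [G1 E1].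
    { intros i' Hi'. apply (Ex4 p n A Sigma); auto. }
    split; [exact G1|]. unfold F. rewrite E1.
    rewrite (sumn_ext n _ (fun i' => m0 ^ (n*p) * (Sigma j k * Sigma l m + (if Nat.eqb i i' then Sigma j l * Sigma k m + Sigma j m * Sigma k l else 0)))).
    - rewrite sumn_scal, sumn_if_const; auto.
    - intros i' Hi'. apply (Ex4 p n A Sigma); auto. }
  destruct (Good_sumn (n*p) n F) as [G1 E1]; [intros; apply HF; auto|].
  destruct (Good_scal (n*p) _ (/ INR n * / INR n) G1) as [G2 E2].
  destruct (Good_ext' (n*p) _ (fun z => Shat p n A z j k * Shat p n A z l m) G2) as [G3 E3].
  { intro z. unfold Shat, F. rewrite <- sumn_mul. ring. }
  split; auto. rewrite E3, E2, E1.
  rewrite (sumn_ext n _ (fun _ => m0 ^ (n*p) * (INR n * (Sigma j k * Sigma l m) + (Sigma j l * Sigma k m + Sigma j m * Sigma k l)))).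
  - rewrite sumn_const. assert (0 < INR n) by (apply lt_0_INR; lia). field. lra.
  - intros i Hi. apply HF; auto.
Qed.

Lemma Good_dsum N p F V :
  (forall j k, (j < p)%nat -> (k < p)%nat -> Good N (F j k) /\ gexp N (F j k) = V j k) ->
  Good N (fun z => sumn p (fun j => sumn p (fun k => F j k z))) /\
  gexp N (fun z => sumn p (fun j => sumn p (fun k => F j k z))) = sumn p (fun j => sumn p (fun k => V j k)).
Proof.
  intros H.
  assert (H1 : forall j, (j < p)%nat -> Good N (fun z => sumn p (fun k => F j k z)) /\
             gexp N (fun z => sumn p (fun k => F j k z)) = sumn p (fun k => V j k)).
  { intros j Hj. destruct (Good_sumn N p (F j)) as [G E]; [intros; apply H; auto|].
    split; auto. rewrite E. apply sumn_ext. intros; apply H; auto. }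
  destruct (Good_sumn N p (fun j z => sumn p (fun k => F j k z))) as [G E]; [intros; apply H1; auto|].
  split; auto. rewrite E. apply sumn_ext. intros; apply H1; auto.
Qed.

Lemma Good_1sum N p F V :
  (forall j, (j < p)%nat -> Good N (F j) /\ gexp N (F j) = V j) ->
  Good N (fun z => sumn p (fun j => F j z)) /\
  gexp N (fun z => sumn p (fun j => F j z)) = sumn p (fun j => V j).
Proof.
  intros H. destruct (Good_sumn N p F) as [G E]; [intros; apply H; auto|].
  split; auto. rewrite E. apply sumn_ext. intros; apply H; auto.
Qed.

Definition T1 p (Sigma : mat) := trace p Sigma.
Definition T2 p (Sigma : mat) := trace_mul p Sigma Sigma.

Lemma dsum_lin3 p a b c f g h :
  sumn p (fun j => sumn p (fun k => a * f j k + b * g j k + c * h j k)) =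
  a * sumn p (fun j => sumn p (fun k => f j k)) + b * sumn p (fun j => sumn p (fun k => g j k))
  + c * sumn p (fun j => sumn p (fun k => h j k)).
Proof.
  rewrite <- !sumn_scal, <- !sumn_plus. apply sumn_ext; intros.
  rewrite <- !sumn_scal, <- !sumn_plus. reflexivity.
Qed.

Lemma trace_sq p (M : mat) : trace p M ^ 2 = sumn p (fun j => sumn p (fun k => M j j * M k k)).
Proof. unfold trace. rewrite <- sumn_mul. ring. Qed.

Lemma Est1 p n A Sigma :
  (forall j k, (j < p)%nat -> (k < p)%nat -> Sigma j k = sumn p (fun l => A j l * A k l)) ->
  (1 <= n)%nat ->
  Good (n * p) (fun z => trace p (Shat p n A z)) /\
  gexp (n * p) (fun z => trace p (Shat p n A z)) = m0 ^ (n * p) * trace p Sigma.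
Proof.
  intros hA hn. unfold trace.
  destruct (Good_1sum (n*p) p (fun j z => Shat p n A z j j) (fun j => m0 ^ (n*p) * Sigma j j)) as [G E].
  { intros j Hj. apply (ES p n A Sigma); auto. }
  split; auto. rewrite E, sumn_scal. reflexivity.
Qed.

Lemma Est3 p n A Sigma :
  (forall j k, (j < p)%nat -> (k < p)%nat -> Sigma j k = sumn p (fun l => A j l * A k l)) ->
  (1 <= n)%nat ->
  Good (n * p) (fun z => trace_mul p Sigma (Shat p n A z)) /\
  gexp (n * p) (fun z => trace_mul p Sigma (Shat p n A z)) = m0 ^ (n * p) * trace_mul p Sigma Sigma.
Proof.
  intros hA hn. unfold trace_mul.
  destruct (Good_dsum (n*p) p (fun j k z => Sigma j k * Shat p n A z k j) (fun j k => m0 ^ (n*p) * (Sigma j k * Sigma k j))) as [G E].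
  { intros j k Hj Hk. destruct (ES p n A Sigma k j hA hn Hk Hj) as [G1 E1].
    destruct (Good_scal _ _ (Sigma j k) G1) as [G2 E2]. split; auto. rewrite E2, E1. ring. }
  split; auto. rewrite E. rewrite <- sumn_scal. apply sumn_ext; intros. rewrite <- sumn_scal. reflexivity.
Qed.

Lemma Est2 p n A Sigma :
  (forall j k, (j < p)%nat -> (k < p)%nat -> Sigma j k = sumn p (fun l => A j l * A k l)) ->
  (1 <= n)%nat ->
  Good (n * p) (fun z => frob2 p (Shat p n A z)) /\
  gexp (n * p) (fun z => frob2 p (Shat p n A z)) =
    m0 ^ (n * p) * (frob2 p Sigma + / INR n * ((trace p Sigma) ^ 2 + trace_mul p Sigma Sigma)).
Proof.
  intros hA hn.
  destruct (Good_dsum (n*p) p (fun j k z => Shat p n A z j k * Shat p n A z j k)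
     (fun j k => m0 ^ (n * p) * (Sigma j k * Sigma j k + / INR n * (Sigma j j * Sigma k k + Sigma j k * Sigma k j)))) as [G E].
  { intros j k Hj Hk. apply (ESS p n A Sigma); auto. }
  destruct (Good_ext' _ _ (fun z => frob2 p (Shat p n A z)) G) as [G' E'].
  { intro z. unfold frob2. apply sumn_ext; intros. apply sumn_ext; intros. ring. }
  split; auto. rewrite E', E.
  transitivity (sumn p (fun j => sumn p (fun k => m0 ^ (n*p) * (Sigma j k ^ 2) + (m0 ^ (n*p) * / INR n) * (Sigma j j * Sigma k k) + (m0 ^ (n*p) * / INR n) * (Sigma j k * Sigma k j)))).
  { apply sumn_ext; intros; apply sumn_ext; intros; ring. }
  rewrite dsum_lin3, trace_sq. unfold frob2, trace_mul. ring.
Qed.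

Lemma Est4 p n A Sigma :
  (forall j k, (j < p)%nat -> (k < p)%nat -> Sigma j k = sumn p (fun l => A j l * A k l)) ->
  (1 <= n)%nat ->
  Good (n * p) (fun z => trace p (Shat p n A z) ^ 2) /\
  gexp (n * p) (fun z => trace p (Shat p n A z) ^ 2) =
    m0 ^ (n * p) * ((trace p Sigma) ^ 2 + / INR n * (2 * frob2 p Sigma)).
Proof.
  intros hA hn.
  destruct (Good_dsum (n*p) p (fun j k z => Shat p n A z j j * Shat p n A z k k)
     (fun j k => m0 ^ (n * p) * (Sigma j j * Sigma k k + / INR n * (Sigma j k * Sigma j k + Sigma j k * Sigma j k)))) as [G E].
  { intros j k Hj Hk. apply (ESS p n A Sigma); auto. }
  destruct (Good_ext' _ _ (fun z => trace p (Shat p n A z) ^ 2) G) as [G' E'].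
  { intro z. rewrite trace_sq. reflexivity. }
  split; auto. rewrite E', E.
  transitivity (sumn p (fun j => sumn p (fun k => m0 ^ (n*p) * (Sigma j j * Sigma k k) + (m0 ^ (n*p) * / INR n) * (Sigma j k ^ 2) + (m0 ^ (n*p) * / INR n) * (Sigma j k ^ 2)))).
  { apply sumn_ext; intros; apply sumn_ext; intros; ring. }
  rewrite dsum_lin3, trace_sq. unfold frob2. ring.
Qed.

Lemma dsum_lin4 p a b c d f g h e :
  sumn p (fun j => sumn p (fun k => a * f j k + b * g j k + c * h j k + d * e j k)) =
  a * sumn p (fun j => sumn p (fun k => f j k)) + b * sumn p (fun j => sumn p (fun k => g j k))
  + c * sumn p (fun j => sumn p (fun k => h j k)) + d * sumn p (fun j => sumn p (fun k => e j k)).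
Proof.
  rewrite <- !sumn_scal, <- !sumn_plus. apply sumn_ext; intros.
  rewrite <- !sumn_scal, <- !sumn_plus. reflexivity.
Qed.

Lemma dsum_lin6 p a b c d a' b' f g h e f' g' :
  sumn p (fun j => sumn p (fun k => a * f j k + b * g j k + c * h j k + d * e j k + a' * f' j k + b' * g' j k)) =
  a * sumn p (fun j => sumn p (fun k => f j k)) + b * sumn p (fun j => sumn p (fun k => g j k))
  + c * sumn p (fun j => sumn p (fun k => h j k)) + d * sumn p (fun j => sumn p (fun k => e j k))
  + a' * sumn p (fun j => sumn p (fun k => f' j k)) + b' * sumn p (fun j => sumn p (fun k => g' j k)).
Proof.
  rewrite <- !sumn_scal, <- !sumn_plus. apply sumn_ext; intros.
  rewrite <- !sumn_scal, <- !sumn_plus. reflexivity.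
Qed.

Lemma LF1 p c (G : mat) : sumn p (fun j => sumn p (fun k => G j k * idmat c j k)) = c * trace p G.
Proof.
  unfold trace. rewrite <- sumn_scal. apply sumn_ext. intros j Hj.
  rewrite (sumn_ext p _ (fun k => if Nat.eqb j k then G j k * c else 0)).
  - rewrite sumn_delta'; auto. ring.
  - intros k Hk. unfold idmat. destruct (Nat.eqb j k); ring.
Qed.

Lemma LF1' p c (G : mat) : sumn p (fun j => sumn p (fun k => G j k * idmat c k j)) = c * trace p G.
Proof.
  rewrite <- (LF1 p c G). apply sumn_ext; intros; apply sumn_ext; intros.
  unfold idmat. rewrite Nat.eqb_sym. reflexivity.
Qed.

Lemma LF2 p c : sumn p (fun j => sumn p (fun k => idmat c j k * idmat c j k)) = INR p * c * c.
Proof.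
  rewrite (sumn_ext p _ (fun j => c * c)).
  - rewrite sumn_const. ring.
  - intros j Hj. rewrite (sumn_ext p _ (fun k => if Nat.eqb j k then c * c else 0)).
    + rewrite sumn_delta'; auto.
    + intros k Hk. unfold idmat. destruct (Nat.eqb j k); ring.
Qed.

Lemma I_b p (M : mat) : (0 < p)%nat ->
  frob2 p (fun j k => M j k - idmat (trace p M / INR p) j k) = frob2 p M - trace p M ^ 2 / INR p.
Proof.
  intros Hp. set (c := trace p M / INR p). unfold frob2.
  transitivity (sumn p (fun j => sumn p (fun k => 1 * (M j k * M j k) + (-2) * (M j k * idmat c j k) + 1 * (idmat c j k * idmat c j k)))).
  { apply sumn_ext; intros; apply sumn_ext; intros; ring. }
  rewrite dsum_lin3, LF1, LF2.
  rewrite (sumn_ext p (fun j => sumn p (fun k => M j k ^ 2)) (fun j => sumn p (fun k => M j k * M j k)))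
    by (intros; apply sumn_ext; intros; ring).
  unfold c. assert (0 < INR p) by (apply lt_0_INR; lia). field. lra.
Qed.

Lemma I_tm p (M Sg : mat) : (0 < p)%nat -> (forall j k, M k j = M j k) ->
  trace_mul p (fun j k => Sg j k - M j k) (fun j k => idmat (trace p M / INR p) j k - M j k) =
  trace p Sg * trace p M / INR p - trace_mul p Sg M - trace p M ^ 2 / INR p + frob2 p M.
Proof.
  intros Hp Hsym. set (c := trace p M / INR p). unfold trace_mul.
  transitivity (sumn p (fun j => sumn p (fun k => 1 * (Sg j k * idmat c k j) + (-1) * (Sg j k * M k j) + (-1) * (M j k * idmat c k j) + 1 * (M j k * M j k)))).
  { apply sumn_ext; intros j Hj; apply sumn_ext; intros k Hk. rewrite (Hsym j). ring. }
  rewrite dsum_lin4, !LF1'.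
  unfold frob2.
  rewrite (sumn_ext p (fun j => sumn p (fun k => M j k ^ 2)) (fun j => sumn p (fun k => M j k * M j k)))
    by (intros; apply sumn_ext; intros; ring).
  unfold c. assert (0 < INR p) by (apply lt_0_INR; lia). field. lra.
Qed.

Lemma I_r p (M Sg : mat) rho : (0 < p)%nat -> (forall j k, M k j = M j k) ->
  frob2 p (fun j k => (1 - rho) * M j k + rho * idmat (trace p M / INR p) j k - Sg j k) =
  frob2 p Sg + (- 2 * rho * trace p Sg / INR p) * trace p M + (1 - 2 * rho + rho ^ 2) * frob2 p M
  + (-2 + 2 * rho) * trace_mul p Sg M + (2 * rho / INR p - rho ^ 2 / INR p) * trace p M ^ 2.
Proof.
  intros Hp Hsym. set (c := trace p M / INR p). unfold frob2.
  transitivity (sumn p (fun j => sumn p (fun k =>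
     ((1 - rho) ^ 2) * (M j k * M j k) + (rho ^ 2) * (idmat c j k * idmat c j k)
     + 1 * (Sg j k * Sg j k) + (2 * rho * (1 - rho)) * (M j k * idmat c j k)
     + (- 2 * (1 - rho)) * (Sg j k * M k j) + (- 2 * rho) * (Sg j k * idmat c j k)))).
  { apply sumn_ext; intros j Hj; apply sumn_ext; intros k Hk. rewrite (Hsym j). ring. }
  rewrite dsum_lin6, LF2, !LF1.
  fold (trace_mul p Sg M).
  rewrite (sumn_ext p (fun j => sumn p (fun k => M j k ^ 2)) (fun j => sumn p (fun k => M j k * M j k)))
    by (intros; apply sumn_ext; intros; ring).
  rewrite (sumn_ext p (fun j => sumn p (fun k => Sg j k ^ 2)) (fun j => sumn p (fun k => Sg j k * Sg j k)))
    by (intros; apply sumn_ext; intros; ring).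
  unfold c. assert (0 < INR p) by (apply lt_0_INR; lia). field. lra.
Qed.

Lemma Good_comb4 N f1 f2 f3 f4 v1 v2 v3 v4 a0 a1 a2 a3 a4 :
  Good N f1 /\ gexp N f1 = v1 -> Good N f2 /\ gexp N f2 = v2 ->
  Good N f3 /\ gexp N f3 = v3 -> Good N f4 /\ gexp N f4 = v4 ->
  Good N (fun z => a0 + a1 * f1 z + a2 * f2 z + a3 * f3 z + a4 * f4 z) /\
  gexp N (fun z => a0 + a1 * f1 z + a2 * f2 z + a3 * f3 z + a4 * f4 z) =
    m0 ^ N * a0 + a1 * v1 + a2 * v2 + a3 * v3 + a4 * v4.
Proof.
  intros [G1 E1] [G2 E2] [G3 E3] [G4 E4].
  destruct (Good_const N a0) as [H0 F0].
  destruct (Good_lin N _ _ a1 H0 G1) as [H1 F1].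
  destruct (Good_lin N _ _ a2 H1 G2) as [H2 F2].
  destruct (Good_lin N _ _ a3 H2 G3) as [H3 F3].
  destruct (Good_lin N _ _ a4 H3 G4) as [H4 F4].
  split; [exact H4|]. rewrite F4, F3, F2, F1, F0, E1, E2, E3, E4. reflexivity.
Qed.

Lemma Shat_sym p n A z j k : Shat p n A z k j = Shat p n A z j k.
Proof. unfold Shat. f_equal. apply sumn_ext. intros. ring. Qed.

Lemma sumn_le m f g : (forall i, (i < m)%nat -> f i <= g i) -> sumn m f <= sumn m g.
Proof.
  induction m; intros H; simpl; [lra|].
  pose proof (H m ltac:(lia)). pose proof (IHm ltac:(intros; apply H; lia)). lra.
Qed.

Lemma cauchy_schwarz p d : (sumn p d) ^ 2 <= INR p * sumn p (fun j => d j ^ 2).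
Proof.
  assert (H : 0 <= sumn p (fun j => sumn p (fun k => 1 * (d j ^ 2) + (-2) * (d j * d k) + 1 * (d k ^ 2)))).
  { apply sumn_nonneg; intros j _; apply sumn_nonneg; intros k _.
    replace (1 * d j ^ 2 + -2 * (d j * d k) + 1 * d k ^ 2) with ((d j - d k) ^ 2) by ring. apply pow2_ge_0. }
  rewrite dsum_lin3 in H.
  rewrite (sumn_ext p (fun j => sumn p (fun k => d j ^ 2)) (fun j => INR p * d j ^ 2)) in H
    by (intros; apply sumn_const).
  rewrite sumn_scal, sumn_const in H. rewrite <- sumn_mul in H. lra.
Qed.

Theorem theorem1 (p n : nat) (Sigma A : mat)
  (hp : (2 <= p)%nat) (hn : (1 <= n)%nat)
  (hsym : forall j k, (j < p)%nat -> (k < p)%nat -> Sigma j k = Sigma k j)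
  (hpd : forall v : nat -> R, (exists j, (j < p)%nat /\ v j <> 0) ->
           0 < sumn p (fun j => sumn p (fun k => v j * Sigma j k * v k)))
  (hA : forall j k, (j < p)%nat -> (k < p)%nat ->
           Sigma j k = sumn p (fun l => A j l * A k l)) :
  let E := gexp (n * p) in
  let risk := fun rho : R =>
    E (fun z => frob2 p (fun j k =>
         (1 - rho) * Shat p n A z j k + rho * Fhat p n A z j k - Sigma j k)) in
  exists rhoO : R,
    (forall rho, rho <> rhoO -> risk rhoO < risk rho) /\
    rhoO = E (fun z => trace_mul p (fun j k => Sigma j k - Shat p n A z j k)
                                   (fun j k => Fhat p n A z j k - Shat p n A z j k))
           / E (fun z => frob2 p (fun j k => Shat p n A z j k - Fhat p n A z j k)) /\
    rhoO = ((1 - 2 / INR p) * trace_mul p Sigma Sigma + (trace p Sigma) ^ 2)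
           / ((INR n + 1 - 2 / INR p) * trace_mul p Sigma Sigma
              + (1 - INR n / INR p) * (trace p Sigma) ^ 2).
Proof.
  intros E risk. subst E risk. cbv beta.
  assert (Hp0 : (0 < p)%nat) by lia.
  assert (Pp : 0 < INR p) by (apply lt_0_INR; lia).
  assert (Pp2 : 2 <= INR p) by (apply (le_INR 2 p) in hp; simpl in hp; lra).
  assert (Pn : 1 <= INR n) by (apply (le_INR 1 n) in hn; simpl in hn; lra).
  set (N := (n * p)%nat).
  set (K := m0 ^ N).
  assert (HK : 0 < K) by (apply pow_lt, m0_pos).
  set (t1 := trace p Sigma). set (t2 := trace_mul p Sigma Sigma).
  assert (HfS : frob2 p Sigma = t2).
  { unfold frob2, t2, trace_mul. apply sumn_ext; intros j Hj; apply sumn_ext; intros k Hk.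
    rewrite (hsym k j) by auto. ring. }
  pose proof (Est1 p n A Sigma hA hn) as S1.
  pose proof (Est2 p n A Sigma hA hn) as S2.
  pose proof (Est3 p n A Sigma hA hn) as S3.
  pose proof (Est4 p n A Sigma hA hn) as S4.
  rewrite HfS in S2, S4. fold N K t1 t2 in S1, S2, S3, S4.
  destruct (Good_comb4 N _ _ _ _ _ _ _ _ 0 0 1 0 (- / INR p) S1 S2 S3 S4) as [Gb Eb].
  destruct (Good_ext' N _ (fun z => frob2 p (fun j k => Shat p n A z j k - Fhat p n A z j k)) Gb) as [Gb' Eb'].
  { intro z. unfold Fhat. rewrite I_b by auto. field; lra. }
  rewrite Eb in Eb'. clear Gb Eb.
  destruct (Good_comb4 N _ _ _ _ _ _ _ _ 0 (t1 / INR p) 1 (-1) (- / INR p) S1 S2 S3 S4) as [Gt Et].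
  destruct (Good_ext' N _ (fun z => trace_mul p (fun j k => Sigma j k - Shat p n A z j k)
                                   (fun j k => Fhat p n A z j k - Shat p n A z j k)) Gt) as [Gt' Et'].
  { intro z. unfold Fhat. rewrite I_tm by (auto; intros; apply Shat_sym). fold t1. field; lra. }
  rewrite Et in Et'. clear Gt Et.
  assert (Er : forall rho, gexp N (fun z => frob2 p (fun j k =>
         (1 - rho) * Shat p n A z j k + rho * Fhat p n A z j k - Sigma j k)) =
         K * t2 + (- 2 * rho * t1 / INR p) * (K * t1) + (1 - 2 * rho + rho ^ 2) * (K * (t2 + / INR n * (t1 ^ 2 + t2)))
         + (-2 + 2 * rho) * (K * t2) + (2 * rho / INR p - rho ^ 2 / INR p) * (K * (t1 ^ 2 + / INR n * (2 * t2)))).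
  { intro rho.
    destruct (Good_comb4 N _ _ _ _ _ _ _ _ t2 (- 2 * rho * t1 / INR p) (1 - 2 * rho + rho ^ 2) (-2 + 2 * rho)
                (2 * rho / INR p - rho ^ 2 / INR p) S1 S2 S3 S4) as [Gr Er].
    destruct (Good_ext' N _ (fun z => frob2 p (fun j k =>
         (1 - rho) * Shat p n A z j k + rho * Fhat p n A z j k - Sigma j k)) Gr) as [Gr' Er'].
    { intro z. unfold Fhat. rewrite I_r by (auto; intros; apply Shat_sym). rewrite HfS. fold t1. ring. }
    rewrite Er', Er. reflexivity. }
  assert (Hdiag : forall j, (j < p)%nat -> 0 < Sigma j j).
  { intros j Hj. pose proof (hpd (fun l => if Nat.eqb l j then 1 else 0)) as H.
    assert (Hx : exists j0, (j0 < p)%nat /\ (if Nat.eqb j0 j then 1 else 0) <> 0).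
    { exists j. rewrite Nat.eqb_refl. split; [auto | lra]. }
    specialize (H Hx).
    rewrite (sumn_ext p _ (fun a => if Nat.eqb a j then Sigma j j else 0)) in H.
    - rewrite sumn_delta in H; auto.
    - intros a Ha. rewrite (sumn_ext p _ (fun b => if Nat.eqb b j then (if Nat.eqb a j then 1 else 0) * Sigma a j else 0)).
      + rewrite sumn_delta by auto. destruct (Nat.eqb_spec a j); [subst; ring| ring].
      + intros b Hb. destruct (Nat.eqb_spec b j); [subst; ring | ring]. }
  assert (Ht1 : 0 < t1).
  { unfold t1, trace. apply Rlt_le_trans with (Sigma 0%nat 0%nat).
    - apply Hdiag; lia.
    - apply (sumn_ge_term p (fun j => Sigma j j) 0%nat); [intros; left; apply Hdiag; auto| lia]. }
  assert (Hcs : t1 ^ 2 <= INR p * t2).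
  { eapply Rle_trans; [apply cauchy_schwarz|]. apply Rmult_le_compat_l; [lra|].
    rewrite <- HfS. unfold frob2. apply sumn_le. intros j Hj.
    apply (sumn_ge_term p (fun k => Sigma j k ^ 2) j); auto. intros; apply pow2_ge_0. }
  assert (Ht2 : 0 <= t2) by (rewrite <- HfS; apply sumn_nonneg; intros; apply sumn_nonneg; intros; apply pow2_ge_0).
  set (gam := 0 * (K * t1) + 1 * (K * (t2 + / INR n * (t1 ^ 2 + t2))) + 0 * (K * t2) + - / INR p * (K * (t1 ^ 2 + / INR n * (2 * t2)))).
  set (bet := t1 / INR p * (K * t1) + 1 * (K * (t2 + / INR n * (t1 ^ 2 + t2))) + -1 * (K * t2) + - / INR p * (K * (t1 ^ 2 + / INR n * (2 * t2)))).
  assert (Hgam : gam = K * (/ INR n) * ((INR n + 1 - 2 / INR p) * t2 + (1 - INR n / INR p) * t1 ^ 2)).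
  { unfold gam. field. lra. }
  assert (Hbet : bet = K * (/ INR n) * ((1 - 2 / INR p) * t2 + t1 ^ 2)).
  { unfold bet. field. lra. }
  assert (HD : 0 < (INR n + 1 - 2 / INR p) * t2 + (1 - INR n / INR p) * t1 ^ 2).
  { replace ((INR n + 1 - 2 / INR p) * t2 + (1 - INR n / INR p) * t1 ^ 2) with
      (INR n * (t2 - t1 ^ 2 / INR p) + (t2 * (1 - 2 / INR p) + t1 ^ 2)) by (field; lra).
    assert (0 <= t2 - t1 ^ 2 / INR p).
    { assert (t1 ^ 2 / INR p <= t2); [|lra].
      apply (Rmult_le_reg_r (INR p)); auto. replace (t1 ^ 2 / INR p * INR p) with (t1 ^ 2) by (field; lra). lra. }
    assert (0 <= 1 - 2 / INR p).
    { assert (2 / INR p <= 1); [|lra]. apply (Rmult_le_reg_r (INR p)); auto.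
      replace (2 / INR p * INR p) with 2 by (field; lra). lra. }
    assert (0 < t1 ^ 2) by (apply pow_lt; lra).
    assert (0 <= INR n * (t2 - t1 ^ 2 / INR p)) by (apply Rmult_le_pos; lra).
    assert (0 <= t2 * (1 - 2 / INR p)) by (apply Rmult_le_pos; lra).
    lra. }
  assert (Pgam : 0 < gam).
  { rewrite Hgam. apply Rmult_lt_0_compat; auto. apply Rmult_lt_0_compat; auto. apply Rinv_0_lt_compat; lra. }
  exists (bet / gam). split; [|split].
  - intros rho Hrho. rewrite !Er.
    set (r0 := bet / gam).
    assert (Hb : bet = gam * r0) by (unfold r0; field; lra).
    assert (Hq : forall x, K * t2 + - 2 * x * t1 / INR p * (K * t1) + (1 - 2 * x + x ^ 2) * (K * (t2 + / INR n * (t1 ^ 2 + t2)))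
       + (-2 + 2 * x) * (K * t2) + (2 * x / INR p - x ^ 2 / INR p) * (K * (t1 ^ 2 + / INR n * (2 * t2)))
       = (K * t2 + 1 * (K * (t2 + / INR n * (t1 ^ 2 + t2))) + (-2) * (K * t2) + 0 * K + 0 * K) - 2 * x * bet + x ^ 2 * gam).
    { intro x. unfold bet, gam. field. lra. }
    rewrite !Hq. rewrite Hb.
    assert (Hsq : 0 < (rho - r0) ^ 2).
    { replace ((rho - r0) ^ 2) with (Rsqr (rho - r0)) by (unfold Rsqr; ring).
      apply Rsqr_pos_lt. intro H0. apply Hrho. unfold r0 in *. lra. }
    assert (0 < gam * (rho - r0) ^ 2) by (apply Rmult_lt_0_compat; auto).
    match goal with |- ?L < ?Rr => replace Rr with (L + gam * (rho - r0) ^ 2) by ring end.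
    lra.
  - rewrite Et', Eb'. unfold bet, gam. fold K. rewrite !Rmult_0_r, !Rplus_0_l. reflexivity.
  - rewrite Hbet, Hgam. field.
    assert (HD' : ((INR n + 1) * INR p - 2) * t2 + (INR p - INR n) * t1 ^ 2 =
       INR p * ((INR n + 1 - 2 / INR p) * t2 + (1 - INR n / INR p) * t1 ^ 2)) by (field; lra).
    rewrite HD'. assert (0 < INR p * ((INR n + 1 - 2 / INR p) * t2 + (1 - INR n / INR p) * t1 ^ 2))
      by (apply Rmult_lt_0_compat; lra).
    repeat split; lra.
Qed.
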